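(* Fix a positive integer $d_m$. For $n$ and $k$ with $k\ge\ell(d_m)$ and $n\ge k+\ell(d_m)+2d_m$, let $n'=n-k-\ell(d_m)-2d_m$ and let $\mathcal C_2(n,k,1,d_m)=\{0^k\vec u1^{d_m}\vec c1^{d_m}:\vec c\in A_2(n',k,d_m)\}$. Then $$\min_{k}\ \mathrm{red}(\mathcal C_2(n,k,1,d_m))=\log_2 n+(d_m-1)\log_2\log_2 n+\Theta(1),$$ and the minimum is attained by values of $k$ of the form $k=\log_2 n+(d_m-1)\log_2\log_2 n+\Theta(1)$.
   Context: Binary alphabet. A vector of length $m$ is a $(d,k)$-WWL vector if $m<k$ or every window of $k$ consecutive entries has Hamming weight at least $d$; $A_2(m,k,d)$ is the set of binary $(d,k)$-WWL vectors of length $m$. $\ell(d)=d\lceil\log_2 d\rceil+d$ and $\vec u=1^d\vec u_0\cdots\vec u_{\lceil\log_2 d\rceil-1}\in\{0,1\}^{\ell(d)}$, where $\vec u_i$ is the length-$d$ prefix of $(1^{2^i}0^{2^i})^d$; here $d=d_m$. For $A\subseteq\{0,1\}^n$, $\mathrm{red}(A)=n-\log_2|A|$. *)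

(* Defs.v *)
From Stdlib Require Import Reals Lra Lia Arith List Bool.
Import ListNotations.
Open Scope R_scope.

Definition log2R (x : R) : R := ln x / ln 2.

Definition weight (v : list bool) : nat := count_occ Bool.bool_dec v true.

Definition window (i k : nat) (v : list bool) : list bool :=
  firstn k (skipn i v).

Definition wwlb (d k : nat) (v : list bool) : bool :=
  (length v <? k)%nat ||
  forallb (fun i => (d <=? weight (window i k v))%nat)
          (seq 0 (S (length v - k))).

Fixpoint all_vectors (m : nat) : list (list bool) :=
  match m with
  | O => [[]]
  | S m' => map (cons false) (all_vectors m') ++ map (cons true) (all_vectors m')
  end.

Definition A2 (m k d : nat) : list (list bool) := filter (wwlb d k) (all_vectors m).

Definition ell (d : nat) : nat := (d * Nat.log2_up d + d)%nat.

Definition u_i (d i : nat) : list bool :=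
  firstn d (concat (repeat (repeat true (2 ^ i) ++ repeat false (2 ^ i)) d)).

(* u = 1^d u_0 ... u_{ceil(log2 d) - 1}, of length ell(d) *)
Definition uvec (d : nat) : list bool :=
  repeat true d ++ concat (map (u_i d) (seq 0 (Nat.log2_up d))).

Definition C2 (n k d : nat) : list (list bool) :=
  let n' := (n - k - ell d - 2 * d)%nat in
  map (fun c => repeat false k ++ uvec d ++ repeat true d ++ c ++ repeat true d)
      (A2 n' k d).

Definition card_set (l : list (list bool)) : nat :=
  length (nodup (list_eq_dec Bool.bool_dec) l).

Definition redC (n k d : nat) : R := INR n - log2R (INR (card_set (C2 n k d))).

Definition admissible (n k d : nat) : Prop :=
  (ell d <= k)%nat /\ (k + ell d + 2 * d <= n)%nat.

Definition is_minimizer (n k d : nat) : Prop :=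
  admissible n k d /\ forall k', admissible n k' d -> redC n k d <= redC n k' d.

Definition main_term (n d : nat) : R :=
  log2R (INR n) + (INR d - 1) * log2R (log2R (INR n)).

(* Main.v *)
Require Import Defs.
From Stdlib Require Import Reals Lra Lia Arith List Bool ZArith.
Import ListNotations.

Open Scope nat_scope.

Definition cnt (m : nat) (P : list bool -> bool) : nat := length (filter P (all_vectors m)).

Lemma all_vectors_len m v : In v (all_vectors m) -> length v = m.
Proof.
  revert v; induction m; simpl; intros v H.
  - destruct H as [<-|[]]; reflexivity.
  - apply in_app_or in H; destruct H as [H|H]; apply in_map_iff in H;
    destruct H as [w [<- Hw]]; simpl; f_equal; auto.
Qed.

Lemma filter_map_comm (f : list bool -> list bool) P l :
  filter P (map f l) = map f (filter (fun x => P (f x)) l).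
Proof. induction l; simpl; auto. destruct (P (f a)); simpl; congruence. Qed.

Lemma cnt_S m P : cnt (S m) P = cnt m (fun w => P (false :: w)) + cnt m (fun w => P (true :: w)).
Proof.
  unfold cnt; simpl. rewrite filter_app, length_app, !filter_map_comm, !length_map. reflexivity.
Qed.

Lemma cnt_0 P : cnt 0 P = if P [] then 1 else 0.
Proof. unfold cnt; simpl. destruct (P []); reflexivity. Qed.

Lemma cnt_ext m P Q : (forall v, length v = m -> P v = Q v) -> cnt m P = cnt m Q.
Proof.
  revert P Q; induction m; intros P Q H.
  - rewrite !cnt_0, H; auto.
  - rewrite !cnt_S. f_equal; apply IHm; intros; apply H; simpl; auto.
Qed.

Lemma cnt_le m P Q : (forall v, length v = m -> P v = true -> Q v = true) -> cnt m P <= cnt m Q.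
Proof.
  revert P Q; induction m; intros P Q H.
  - rewrite !cnt_0. specialize (H [] eq_refl). destruct (P []), (Q []); simpl; auto; discriminate H; auto.
  - rewrite !cnt_S. apply Nat.add_le_mono; apply IHm; intros; apply H; simpl; auto.
Qed.

Lemma cnt_split m P Q : cnt m P = cnt m (fun v => P v && Q v) + cnt m (fun v => P v && negb (Q v)).
Proof.
  revert P Q; induction m; intros P Q.
  - rewrite !cnt_0. destruct (P []), (Q []); auto.
  - rewrite !cnt_S. rewrite (IHm (fun w => P (false :: w)) (fun w => Q (false :: w))), (IHm (fun w => P (true :: w)) (fun w => Q (true :: w))). simpl. lia.
Qed.

Lemma cnt_true m : cnt m (fun _ => true) = 2 ^ m.
Proof. induction m. reflexivity. rewrite cnt_S, IHm. simpl. lia. Qed.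

Lemma cnt_app a b P Q :
  cnt (a + b) (fun v => P (firstn a v) && Q (skipn a v)) = cnt a P * cnt b Q.
Proof.
  revert P; induction a; intros P.
  - simpl. rewrite cnt_0. destruct (P []); simpl.
    + rewrite Nat.add_0_r. apply cnt_ext; auto.
    + transitivity (cnt b (fun _ => false)); [apply cnt_ext; auto|]. clear. induction b. reflexivity.
      rewrite cnt_S, IHb. reflexivity.
  - simpl plus. rewrite !cnt_S. simpl.
    rewrite (IHa (fun w => P (false :: w))), (IHa (fun w => P (true :: w))). lia.
Qed.

Lemma cnt_bound m P : cnt m P <= 2 ^ m.
Proof. rewrite <- cnt_true. apply cnt_le; auto. Qed.

Open Scope nat_scope.

Definition bitf (u : list bool) (j : nat) : nat := if nth j u false then 1 else 0.

Fixpoint cw (f : nat -> nat) (i a : nat) : nat :=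
  match a with O => O | S a' => f i + cw f (S i) a' end.

Lemma cw_split f i a b : cw f i (a + b) = cw f i a + cw f (i + a) b.
Proof. revert i; induction a; intros i; simpl. rewrite Nat.add_0_r; auto.
  rewrite IHa. replace (S i + a) with (i + S a) by lia. lia. Qed.

Lemma cw_le f i a : (forall j, f j <= 1) -> cw f i a <= a.
Proof. intros H; revert i; induction a; intros i; simpl; auto. specialize (H i); specialize (IHa (S i)); lia. Qed.

Lemma bitf_le u j : bitf u j <= 1.
Proof. unfold bitf; destruct (nth j u false); auto. Qed.

Lemma cwb_le u i a : cw (bitf u) i a <= a.
Proof. apply cw_le, bitf_le. Qed.

Lemma cw_ext f g i a : (forall j, i <= j < i + a -> f j = g j) -> cw f i a = cw g i a.
Proof. revert i; induction a; intros i H; simpl; auto. rewrite H by lia. rewrite IHa; auto.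
  intros; apply H; lia. Qed.

Lemma cw_shift f c i a : cw f (c + i) a = cw (fun j => f (c + j)) i a.
Proof. revert i; induction a; intros i; simpl; auto. rewrite <- IHa. f_equal. f_equal. lia. Qed.

Lemma bitf_cons u b j : bitf (b :: u) (S j) = bitf u j.
Proof. reflexivity. Qed.

Lemma bitf_nil j : bitf [] j = 0.
Proof. unfold bitf; destruct j; reflexivity. Qed.

Lemma cw_zero i a : cw (fun _ => 0) i a = 0.
Proof. revert i; induction a; simpl; auto. Qed.

Lemma weight_cons b w : weight (b :: w) = (if b then 1 else 0) + weight w.
Proof. unfold weight; destruct b; reflexivity. Qed.

Lemma weight_app x y : weight (x ++ y) = weight x + weight y.
Proof. unfold weight; apply count_occ_app. Qed.

Lemma weight_firstn_cw n l : weight (firstn n l) = cw (bitf l) 0 n.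
Proof.
  revert n; induction l as [|b l IHl]; intros n.
  - rewrite firstn_nil. transitivity (cw (fun _ => 0) 0 n). rewrite cw_zero; reflexivity.
    apply cw_ext; intros; rewrite bitf_nil; auto.
  - destruct n as [|n]; simpl. reflexivity. rewrite weight_cons, IHl.
    change (cw (bitf (b :: l)) 1 n) with (cw (bitf (b :: l)) (1 + 0) n).
    rewrite cw_shift. reflexivity.
Qed.

Lemma bitf_skipn i u j : bitf (skipn i u) j = bitf u (i + j).
Proof. unfold bitf; rewrite nth_skipn; reflexivity. Qed.

Lemma W_cw u i a : weight (firstn a (skipn i u)) = cw (bitf u) i a.
Proof.
  rewrite weight_firstn_cw. replace i with (i + 0) at 2 by lia. rewrite cw_shift.
  apply cw_ext; intros; apply bitf_skipn.
Qed.

Lemma weight_cw u : weight u = cw (bitf u) 0 (length u).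
Proof. rewrite <- weight_firstn_cw, firstn_all; auto. Qed.

Definition Gp (k d : nat) (u : list bool) : Prop :=
  forall i, i + k <= length u -> d <= cw (bitf u) i k.

Lemma wwlb_iff d k u : wwlb d k u = true <-> Gp k d u.
Proof.
  unfold wwlb, Gp, window. rewrite orb_true_iff, Nat.ltb_lt, forallb_forall. split.
  - intros [H|H] i Hi. lia. rewrite <- W_cw. apply Nat.leb_le, H, in_seq. lia.
  - intros H. destruct (Nat.lt_ge_cases (length u) k) as [Hl|Hl]; [left; auto|right].
    intros i Hi. apply in_seq in Hi. apply Nat.leb_le. rewrite W_cw. apply H. lia.
Qed.

Lemma bitf_app r x j : bitf (r ++ x) j = if j <? length r then bitf r j else bitf x (j - length r).
Proof. unfold bitf. destruct (Nat.ltb_spec j (length r)).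
  rewrite app_nth1; auto. rewrite app_nth2; auto. Qed.

Open Scope nat_scope.

Lemma cw1 f i a : cw f (1 + i) a = cw (fun j => f (S j)) i a.
Proof. apply cw_shift. Qed.

Lemma Gp_tl k d b u : Gp k d (b :: u) -> Gp k d u.
Proof.
  unfold Gp; intros H i Hi. specialize (H (S i)). simpl in H.
  change (S i) with (1 + i) in H. rewrite cw1 in H. apply H; lia.
Qed.

Lemma Gp_cons k d b u : k <= S (length u) ->
  (Gp k d (b :: u) <-> d <= cw (bitf (b :: u)) 0 k /\ Gp k d u).
Proof.
  intros Hk; split.
  - intros H; split. apply H; simpl; lia. eapply Gp_tl; eauto.
  - intros [H0 H] [|i] Hi; auto. change (S i) with (1 + i). rewrite cw1.
    apply H. simpl in Hi; lia.
Qed.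

Lemma Gp_skipn k d j u : 1 <= k -> Gp k d u -> Gp k d (skipn j u).
Proof.
  unfold Gp; intros Hk H i Hi. rewrite length_skipn in Hi.
  destruct (Nat.le_gt_cases j (length u)).
  - rewrite (cw_ext _ (fun x => bitf u (j + x))) by (intros; apply bitf_skipn).
    rewrite <- cw_shift. apply H. lia.
  - lia.
Qed.

Lemma Gp_S k d u : Gp k d u -> Gp (S k) d u.
Proof.
  unfold Gp; intros H i Hi. rewrite <- Nat.add_1_r, cw_split. specialize (H i). lia.
Qed.

Lemma Gp_short k d u : length u < k -> Gp k d u.
Proof. unfold Gp; intros; lia. Qed.

Lemma all_vectors_complete v : In v (all_vectors (length v)).
Proof.
  induction v as [|b v IH]; simpl. auto.
  apply in_or_app. destruct b; [right|left]; apply in_map; auto.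
Qed.

Lemma cnt_pos m P v : length v = m -> P v = true -> 1 <= cnt m P.
Proof.
  intros <- H. unfold cnt. assert (In v (filter P (all_vectors (length v)))).
  apply filter_In; split; auto using all_vectors_complete.
  destruct (filter P _); simpl in *; [contradiction|lia].
Qed.

Lemma bitf_repeat m j : j < m -> bitf (repeat true m) j = 1.
Proof. intros; unfold bitf; rewrite nth_repeat_lt; auto. Qed.

Lemma Gp_ones k d m : d <= k -> Gp k d (repeat true m).
Proof.
  unfold Gp; intros Hd i Hi. rewrite repeat_length in Hi.
  rewrite (cw_ext _ (fun _ => 1)). 2: intros; apply bitf_repeat; lia.
  enough (cw (fun _ => 1) i k = k) by lia. clear. revert i; induction k; simpl; auto.
Qed.

Section Rec.
Variables k d : nat.
Hypothesis hk : 1 <= k.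
Hypothesis hdk : d <= k.

Definition a (m : nat) := cnt m (wwlb d k).
Definition firstok (v : list bool) := d <=? weight (firstn k v).
Definition bad (n : nat) := cnt n (fun v => wwlb d k (tl v) && negb (firstok v)).

Lemma a_pos m : 1 <= a m.
Proof. apply (cnt_pos _ _ (repeat true m)). apply repeat_length. apply wwlb_iff, Gp_ones; auto. Qed.

Lemma a_S m : a (S m) <= 2 * a m.
Proof.
  unfold a. rewrite cnt_S. assert (forall b, cnt m (fun w => wwlb d k (b :: w)) <= cnt m (wwlb d k)).
  intros b; apply cnt_le; intros v _ H. apply wwlb_iff in H; apply wwlb_iff; eapply Gp_tl; eauto.
  pose proof (H false); pose proof (H true); lia.
Qed.

Lemma a_short m : m < k -> a m = 2 ^ m.
Proof. intros H; unfold a. rewrite <- cnt_true. apply cnt_ext; intros. apply wwlb_iff, Gp_short; lia. Qed.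

Lemma a_rec m : k <= S m -> 2 * a m = a (S m) + bad (S m).
Proof.
  intros H. unfold bad, a.
  assert (E : 2 * cnt m (wwlb d k) = cnt (S m) (fun v => wwlb d k (tl v))).
  { rewrite cnt_S. rewrite (cnt_ext m (fun w => wwlb d k (tl (false :: w))) (wwlb d k)) by auto. rewrite (cnt_ext m (fun w => wwlb d k (tl (true :: w))) (wwlb d k)) by auto. lia. }
  rewrite E, (cnt_split _ _ firstok). f_equal. apply cnt_ext. intros v Hv.
  destruct v as [|b u]; [simpl in Hv; lia|]. simpl tl. simpl in Hv.
  apply eq_true_iff_eq. rewrite andb_true_iff, !wwlb_iff, Gp_cons by lia.
  unfold firstok. rewrite Nat.leb_le, weight_firstn_cw. tauto.
Qed.

Definition Sb := cnt k (fun r => negb (d <=? weight r)).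

Lemma bad_le n : k <= n -> bad n <= Sb * a (n - k).
Proof.
  intros H. unfold bad, Sb, a. rewrite <- cnt_app.
  replace n with (k + (n - k)) at 1 by lia. apply cnt_le. intros v Hv Hb.
  apply andb_true_iff in Hb as [H1 H2]. apply andb_true_iff; split; auto.
  apply wwlb_iff in H1; apply wwlb_iff. destruct v as [|b u]. simpl in Hv; lia.
  simpl in H1. destruct k as [|k']. lia. simpl. apply Gp_skipn; auto; lia.
Qed.

Lemma core v : 1 <= d -> 2 * k + d <= length v ->
  cw (bitf v) 0 k = d - 1 -> cw (bitf v) 0 (d - 1) = 0 -> cw (bitf v) k d = d ->
  (forall i, i + k <= length v - (k + d) -> d <= cw (bitf v) (k + d + i) k) ->
  Gp k d (tl v) /\ weight (firstn k v) < d.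
Proof.
  intros hd Hl H1 H2 H3 H4. split.
  2:{ rewrite weight_firstn_cw; lia. }
  destruct v as [|b u]; [simpl in Hl; lia|]. simpl tl. intros i Hi. simpl in Hl.
  change (cw (bitf u) i k) with (cw (fun j => bitf (b :: u) (S j)) i k). rewrite <- cw1.
  set (f := bitf (b :: u)) in *. simpl plus. set (j := S i).
  assert (Hj : j + k <= S (length u)) by (unfold j; lia). assert (Hj1 : 1 <= j) by (unfold j; lia). clearbody j.
  simpl length in H4. pose proof (cwb_le (b :: u)) as Hle. fold f in Hle.
  destruct (Nat.le_gt_cases j (d - 1)) as [C1|C1].
  {
    pose proof (cw_split f 0 j (k - j)) as E1. replace (j + (k - j)) with k in E1 by lia.
    pose proof (cw_split f 0 j (d - 1 - j)) as E2. replace (j + (d - 1 - j)) with (d - 1) in E2 by lia.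
    pose proof (cw_split f j (k - j) j) as E3. replace (k - j + j) with k in E3 by lia.
    replace (j + (k - j)) with k in E3 by lia.
    pose proof (cw_split f k j (d - j)) as E4. replace (j + (d - j)) with d in E4 by lia.
    pose proof (Hle (k + j) (d - j)). rewrite ?Nat.add_0_l in *. lia. }
  destruct (Nat.le_gt_cases j k) as [C2|C2].
  { pose proof (cw_split f j (k - j) (d + (j - d))) as E1.
    replace (k - j + (d + (j - d))) with k in E1 by lia. replace (j + (k - j)) with k in E1 by lia.
    pose proof (cw_split f k d (j - d)) as E2. lia. }
  destruct (Nat.le_gt_cases j (k + d)) as [C3|C3].
  { set (e := j - k).
    pose proof (cw_split f j (d - e) (k - d + e)) as E1.
    replace (d - e + (k - d + e)) with k in E1 by lia. replace (j + (d - e)) with (k + d) in E1 by (unfold e; lia).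
    pose proof (cw_split f k e (d - e)) as E2. replace (e + (d - e)) with d in E2 by lia.
    replace (k + e) with j in E2 by (unfold e; lia).
    pose proof (cw_split f (k + d) (k - d + e) (d - e)) as E3.
    replace (k - d + e + (d - e)) with k in E3 by lia.
    pose proof (H4 0). rewrite Nat.add_0_r in H. specialize (H ltac:(lia)).
    pose proof (Hle k e). pose proof (Hle (k + d + (k - d + e)) (d - e)). lia. }
  replace j with (k + d + (j - k - d)) by lia. apply H4. lia.
Qed.

End Rec.

Open Scope nat_scope.

Lemma weight_le l : weight l <= length l.
Proof. apply count_occ_bound. Qed.

Lemma cnt_false m : cnt m (fun _ => false) = 0.
Proof. induction m; auto. rewrite cnt_S, IHm; auto. Qed.

Definition allz (l : list bool) := weight l =? 0.
Definition allo (l : list bool) := weight l =? length l.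
Definition w1 (l : list bool) := weight l =? 1.

Lemma cnt_allz m : cnt m allz = 1.
Proof. induction m; auto. rewrite cnt_S.
  rewrite (cnt_ext m (fun w => allz (false :: w)) allz), (cnt_ext m (fun w => allz (true :: w)) (fun _ => false)), cnt_false, IHm; auto;
  intros v _; unfold allz; rewrite weight_cons; auto. Qed.

Lemma cnt_allo m : cnt m allo = 1.
Proof. induction m; auto. rewrite cnt_S.
  rewrite (cnt_ext m (fun w => allo (false :: w)) (fun _ => false)), (cnt_ext m (fun w => allo (true :: w)) allo), cnt_false, IHm; auto;
  intros v _; unfold allo; rewrite weight_cons; simpl; auto.
  pose proof (weight_le v). apply Nat.eqb_neq. lia. Qed.

Lemma cnt_w1 m : cnt m w1 = m.
Proof. induction m; auto. rewrite cnt_S.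
  rewrite (cnt_ext m (fun w => w1 (false :: w)) w1), (cnt_ext m (fun w => w1 (true :: w)) allz), cnt_allz, IHm; auto. lia.
  all: intros v _; unfold allz, w1; rewrite weight_cons; auto. Qed.

Fixpoint blk (j q : nat) (v : list bool) : bool :=
  match j with O => true | S j' => w1 (firstn q v) && blk j' q (skipn q v) end.

Lemma cnt_blk j q : cnt (j * q) (blk j q) = q ^ j.
Proof.
  induction j. simpl. rewrite cnt_0; auto.
  simpl blk. change (S j * q) with (q + j * q). rewrite cnt_app, cnt_w1, IHj. simpl; lia.
Qed.

Lemma blk_weight j q v : blk j q v = true -> length v = j * q -> weight v = j.
Proof.
  revert v; induction j; intros v H Hl.
  - simpl in Hl. destruct v; [reflexivity|simpl in Hl; lia].
  - simpl in H. apply andb_true_iff in H as [H1 H2]. unfold w1 in H1. apply Nat.eqb_eq in H1.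
    rewrite <- (firstn_skipn q v), weight_app, H1, IHj; auto. rewrite length_skipn. simpl in Hl. lia.
Qed.

Lemma cw_skipn c u i n : cw (bitf (skipn c u)) i n = cw (bitf u) (c + i) n.
Proof. rewrite cw_shift. apply cw_ext; intros; apply bitf_skipn. Qed.

Lemma cw_firstn m u i n : i + n <= m -> cw (bitf (firstn m u)) i n = cw (bitf u) i n.
Proof. intros H; apply cw_ext; intros j Hj. unfold bitf. rewrite nth_firstn.
  destruct (Nat.ltb_spec j m); auto; lia. Qed.

Section Pat.
Variables k d : nat.
Hypothesis hk : 1 <= k.
Hypothesis hd : 1 <= d.
Hypothesis hdk : d <= k.

Definition q := (k - d + 1) / (d - 1).
Definition a1 := d - 1.
Definition a2 := (d - 1) * q.
Definition a3 := k - a1 - a2.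

Lemma a12 : a1 + a2 <= k.
Proof. unfold a1, a2, q. pose proof (Nat.Div0.mul_div_le (k - d + 1) (d - 1)). lia. Qed.

Definition R3 (w : list bool) := allz (firstn a3 w) && allo (skipn a3 w).
Definition R2 (w : list bool) := blk (d - 1) q (firstn a2 w) && R3 (skipn a2 w).
Definition Rpat (v : list bool) := allz (firstn a1 v) && R2 (skipn a1 v).

Lemma cnt_Rpat : cnt (k + d) Rpat = q ^ (d - 1).
Proof.
  pose proof a12. replace (k + d) with (a1 + (a2 + (a3 + d))) by (unfold a3; lia).
  unfold Rpat. rewrite cnt_app, cnt_allz. unfold R2. rewrite cnt_app. unfold a2.
  rewrite Nat.mul_comm, cnt_blk. unfold R3. rewrite cnt_app, cnt_allz, cnt_allo. lia.
Qed.

Lemma Rpat_props r : length r = k + d -> Rpat r = true ->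
  cw (bitf r) 0 k = d - 1 /\ cw (bitf r) 0 (d - 1) = 0 /\ cw (bitf r) k d = d.
Proof.
  intros Hl H. pose proof a12. unfold Rpat, R2, R3 in H.
  repeat rewrite andb_true_iff in H. destruct H as [Ha [Hb [Hc Hd]]].
  unfold allz, allo in *. apply Nat.eqb_eq in Ha, Hc, Hd.
  apply blk_weight in Hb. 2:{ rewrite length_firstn, length_skipn. unfold a2 in *. lia. }
  rewrite weight_firstn_cw in Ha. rewrite W_cw in Hb. rewrite W_cw, !cw_skipn in Hc.
  rewrite !skipn_skipn in Hd. rewrite weight_cw, length_skipn, cw_skipn in Hd.
  rewrite ?Nat.add_0_r in Hb, Hc.
  pose proof (cw_split (bitf r) 0 a1 (a2 + a3)) as E1. pose proof (cw_split (bitf r) a1 a2 a3) as E2.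
  simpl plus in E1. replace (a1 + (a2 + a3)) with k in E1 by (unfold a3; lia).
  unfold a1 in *. rewrite Nat.add_0_r in Hd.
  replace (a3 + a2 + (d - 1)) with k in Hd by (unfold a3, a1 in *; lia).
  replace (length r - k) with d in Hd by lia. replace (a2 + (d - 1)) with (d - 1 + a2) in Hc by lia.
  replace (a2 + a3) with (k - (d - 1)) in E1, E2 by (unfold a3, a1 in *; lia). lia.
Qed.

Definition Rc := cnt (k + d) Rpat.

Lemma bad_ge n : 2 * k + d <= n -> Rc * a k d (n - (k + d)) <= bad k d n.
Proof.
  intros Hn. unfold Rc, a, bad. rewrite <- (cnt_app (k + d) (n - (k + d)) Rpat (wwlb d k)).
  set (m := n - (k + d)). replace n with (k + d + m) by (unfold m; lia).
  apply cnt_le. intros v Hv H. apply andb_true_iff in H as [H1 H2].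
  apply Rpat_props in H1. 2:{ rewrite length_firstn; lia. }
  rewrite !cw_firstn in H1 by lia. destruct H1 as [E1 [E2 E3]].
  apply wwlb_iff in H2.
  destruct (core k d hk hdk v hd ltac:(lia) E1 E2 E3) as [G W].
  { intros i Hi. rewrite <- cw_skipn. apply H2. rewrite length_skipn. lia. }
  apply andb_true_iff; split. apply wwlb_iff; auto. unfold firstok. apply negb_true_iff, Nat.leb_gt; auto.
Qed.

End Pat.


Open Scope nat_scope.

Definition Bc (k d : nat) := cnt k (fun r => weight r <? d).

Lemma Bc0 k : Bc k 0 = 0.
Proof. unfold Bc. rewrite (cnt_ext _ _ (fun _ => false)). apply cnt_false. intros; apply Nat.ltb_ge; lia. Qed.

Lemma Bc_S k d : Bc (S k) (S d) = Bc k (S d) + Bc k d.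
Proof. unfold Bc. rewrite cnt_S. f_equal; apply cnt_ext; intros v _; rewrite weight_cons; simpl; auto. Qed.

Lemma Bc_bound k d : Bc k (S d) <= (k + 1) ^ d.
Proof.
  revert d; induction k; intros d.
  - unfold Bc. rewrite cnt_0. simpl. rewrite Nat.pow_1_l. destruct d; simpl; lia.
  - rewrite Bc_S. destruct d.
    + rewrite Bc0, Nat.add_0_r. pose proof (IHk 0). simpl in *. lia.
    + pose proof (IHk (S d)). pose proof (IHk d).
      replace (S k + 1) with (k + 2) by lia.
      assert ((k + 1) ^ d <= (k + 2) ^ d) by (apply Nat.pow_le_mono_l; lia).
      simpl in *. nia.
Qed.

Lemma Sb_bound k d : 1 <= d -> Sb k d <= (k + 1) ^ (d - 1).
Proof.
  intros Hd. unfold Sb.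
  eapply Nat.le_trans; [|apply (Bc_bound k (d - 1))]. unfold Bc. apply Nat.eq_le_incl, cnt_ext. intros.
  destruct (Nat.ltb_spec (weight v) (S (d - 1))), (Nat.leb_spec d (weight v)); simpl; auto; lia.
Qed.

Open Scope R_scope.

Lemma ln_le' x y : 0 < x -> x <= y -> ln x <= ln y.
Proof. intros H1 H2. destruct (Rle_lt_or_eq_dec _ _ H2). left; apply ln_increasing; auto. subst; lra. Qed.

Lemma exp_pow' x n : exp x ^ n = exp (INR n * x).
Proof. induction n. simpl. rewrite Rmult_0_l, exp_0; auto.
  rewrite S_INR, <- tech_pow_Rmult, IHn. rewrite <- exp_plus. f_equal. ring. Qed.

Lemma ln2_gt : / 2 < ln 2.
Proof.
  assert (exp (/2) < 2).
  { assert (exp (/2) * exp (/2) = exp 1) by (rewrite <- exp_plus; f_equal; lra).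
    pose proof exp_le_3. pose proof (exp_pos (/2)). nra. }
  rewrite <- (ln_exp (/2)). apply ln_increasing; auto. apply exp_pos.
Qed.

Lemma ln2_lt : ln 2 < 1.
Proof. rewrite <- (ln_exp 1). apply ln_increasing. lra. pose proof (exp_ineq1 1). lra. Qed.

Lemma ln2_pos : 0 < ln 2.
Proof. pose proof ln2_gt; lra. Qed.

Lemma bernoulli x n : 0 <= x <= 1 -> 1 - INR n * x <= (1 - x) ^ n.
Proof. intros H. induction n. simpl; lra. rewrite S_INR. simpl.
  assert (0 <= (1-x)^n) by (apply pow_le; lra). pose proof (pos_INR n). nra. Qed.

Lemma log2R_pow2 m : log2R (2 ^ m) = INR m.
Proof. unfold log2R. rewrite ln_pow by lra. field. apply Rgt_not_eq, ln2_pos. Qed.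

Section Bounds.
Variables k d : nat.
Hypothesis hk : (1 <= k)%nat.
Hypothesis hd : (1 <= d)%nat.
Hypothesis hdk : (d <= k)%nat.

Definition A m := INR (a k d m).

Lemma A_pos m : 1 <= A m.
Proof. unfold A. apply (le_INR 1). apply a_pos; auto. Qed.

Lemma chain_up (lam : R) j : 0 <= lam ->
  (forall i, (i < j)%nat -> lam * A i <= A (S i)) ->
  forall i0 t, (i0 + t <= j)%nat -> lam ^ t * A i0 <= A (i0 + t).
Proof.
  intros Hl H i0 t. induction t; intros Ht. simpl. rewrite Nat.add_0_r; lra.
  rewrite Nat.add_succ_r. specialize (H (i0 + t)%nat ltac:(lia)). specialize (IHt ltac:(lia)).
  simpl. nra.
Qed.

Lemma A_S2 x t : A (x + t) <= 2 ^ t * A x.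
Proof.
  induction t. simpl. rewrite Nat.add_0_r; lra.
  rewrite Nat.add_succ_r. unfold A in *. pose proof (a_S k d hk hdk (x + t)).
  apply le_INR in H. rewrite mult_INR in H. simpl in *. lra.
Qed.

Lemma A_short m : (m < k)%nat -> A m = 2 ^ m.
Proof. intros H. unfold A. rewrite a_short by auto. rewrite pow_INR. simpl. f_equal. Qed.

Lemma lowerA (Hc : (4 * k * Sb k d <= 2 ^ k)%nat) :
  let eps := 2 * INR (Sb k d) / 2 ^ k in
  forall m, (2 * (1 - eps)) ^ m <= A m.
Proof.
  intros eps.
  set (S0 := INR (Sb k d)) in *.
  assert (Hk2 : 0 < 2 ^ k) by (apply pow_lt; lra).
  assert (HcR : 4 * INR k * S0 <= 2 ^ k).
  { apply le_INR in Hc. rewrite !mult_INR, pow_INR in Hc.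
    assert (E4 : INR 4 = 4) by (simpl; lra). assert (E2 : INR 2 = 2) by (simpl; lra).
    rewrite E4, E2 in Hc. unfold S0; lra. }
  assert (HS0 : 0 <= S0) by apply pos_INR.
  assert (HkR : 1 <= INR k) by (apply (le_INR 1); auto).
  assert (He0 : 0 <= eps).
  { unfold eps, Rdiv. apply Rmult_le_pos. lra. left; apply Rinv_0_lt_compat; auto. }
  assert (Hke : INR k * eps <= / 2).
  { unfold eps. apply (Rmult_le_reg_r (2 ^ k)); auto. field_simplify; lra. }
  assert (He1 : eps <= / 2) by nra.
  set (lam := 2 * (1 - eps)).
  assert (Hlam : 1 <= lam) by (unfold lam; lra).
  assert (step : forall j, lam * A j <= A (S j)).
  { intro j. induction j as [j IH] using (well_founded_induction lt_wf).
    destruct (Nat.lt_ge_cases (S j) k) as [C|C].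
    - rewrite !A_short by lia. simpl. pose proof (pow_le 2 j). unfold lam. nra.
    - pose proof (a_rec k d hk hdk j C) as R. pose proof (bad_le k d hk hdk (S j) C) as B.
      assert (R' : A (S j) >= 2 * A j - S0 * A (S j - k)).
      { unfold A, S0. apply (le_INR) in B. rewrite mult_INR in B.
        apply (f_equal INR) in R. rewrite mult_INR, plus_INR in R. simpl in R. lra. }
      assert (Ch : lam ^ (k - 1) * A (S j - k) <= A j).
      { pose proof (chain_up lam j ltac:(lra) (fun i Hi => IH i Hi) (S j - k) (k - 1) ltac:(lia)).
        replace (S j - k + (k - 1))%nat with j in H by lia. auto. }
      assert (Hpow : 2 ^ k / 4 <= lam ^ (k - 1)).
      { unfold lam. rewrite Rpow_mult_distr.
        pose proof (bernoulli eps (k - 1) ltac:(lra)). rewrite minus_INR in H by lia. simpl in H.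
        assert (E : 2 ^ k = 2 * 2 ^ (k - 1)) by (replace k with (S (k - 1)) at 1 by lia; reflexivity).
        rewrite E.
        assert (0 < 2 ^ (k - 1)) by (apply pow_lt; lra). nra. }
      assert (A (S j - k) <= 4 * A j / 2 ^ k).
      { pose proof (A_pos (S j - k)). apply (Rmult_le_reg_r (2 ^ k / 4)). lra.
        field_simplify; try lra. nra. }
      assert (S0 * A (S j - k) <= 2 * eps * A j).
      { unfold eps. replace (2 * (2 * S0 / 2 ^ k) * A j) with (S0 * (4 * A j / 2 ^ k)) by (field; lra).
        apply Rmult_le_compat_l; auto. }
      unfold lam. lra. }
  intro m. induction m. simpl. rewrite A_short by lia. simpl; lra.
  simpl. pose proof (step m). fold lam. nra.
Qed.


Lemma log2_le x y : 0 < x -> x <= y -> log2R x <= log2R y.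
Proof. intros. unfold log2R. apply Rmult_le_compat_r. left; apply Rinv_0_lt_compat, ln2_pos.
  apply ln_le'; auto. Qed.

Lemma ln_1m e : 0 <= e <= / 2 -> - (2 * e) <= ln (1 - e).
Proof.
  intros H. rewrite <- (ln_exp (- (2 * e))). apply ln_le'. apply exp_pos.
  rewrite exp_Ropp. pose proof (exp_ineq1_le (2 * e)). pose proof (exp_pos (2 * e)).
  apply (Rmult_le_reg_r (exp (2 * e))); auto. rewrite Rinv_l by lra. nra.
Qed.

Lemma fupper (Hc : (4 * k * Sb k d <= 2 ^ k)%nat) m :
  INR m - log2R (A m) <= 8 * INR (Sb k d) / 2 ^ k * INR m.
Proof.
  pose proof (lowerA Hc m) as H. simpl in H.
  set (S0 := INR (Sb k d)) in *. set (eps := 2 * S0 / 2 ^ k) in *.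
  assert (Hk2 : 0 < 2 ^ k) by (apply pow_lt; lra).
  assert (HcR : 4 * INR k * S0 <= 2 ^ k).
  { apply le_INR in Hc. rewrite !mult_INR, pow_INR in Hc.
    assert (E4 : INR 4 = 4) by (simpl; lra). assert (E2 : INR 2 = 2) by (simpl; lra).
    rewrite E4, E2 in Hc. unfold S0; lra. }
  assert (HS0 : 0 <= S0) by apply pos_INR.
  assert (HkR : 1 <= INR k) by (apply (le_INR 1); auto).
  assert (He0 : 0 <= eps).
  { unfold eps, Rdiv. apply Rmult_le_pos. lra. left; apply Rinv_0_lt_compat; auto. }
  assert (Hke : INR k * eps <= / 2).
  { unfold eps. apply (Rmult_le_reg_r (2 ^ k)); auto. field_simplify; lra. }
  assert (He1 : eps <= / 2) by nra.
  assert (Hl : 0 < 2 * (1 - eps)) by lra.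
  apply log2_le in H. 2: apply pow_lt; lra.
  unfold log2R in H |- *. rewrite ln_pow in H by lra. rewrite ln_mult in H by lra.
  pose proof (ln_1m eps ltac:(lra)). pose proof ln2_gt. pose proof (pos_INR m).
  replace (8 * S0 / 2 ^ k) with (4 * eps) by (unfold eps; field; lra).
  assert (INR m * (ln 2 + ln (1 - eps)) / ln 2 >= INR m * (1 - 4 * eps)).
  { unfold Rdiv. rewrite Rmult_assoc. apply Rle_ge, Rmult_le_compat_l; auto.
    apply (Rmult_le_reg_r (ln 2)). lra. rewrite Rmult_assoc, Rinv_l by lra. nra. }
  lra.
Qed.

Lemma log2_A_le m : log2R (A m) <= INR m.
Proof.
  pose proof (A_S2 0 m). simpl in H. unfold A in H. rewrite (a_short k d hk hdk 0%nat) in H by lia. simpl in H.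
  rewrite Rmult_1_r in H. rewrite <- log2R_pow2. apply log2_le; auto. pose proof (A_pos m); lra.
Qed.

Lemma flower m : (2 * k + d - 1 <= m)%nat ->
  INR (m - (2 * k + d - 1)) * INR (Rc k d) / 2 ^ (k + d) <= INR m - log2R (A m).
Proof.
  intros Hm. set (T := (2 * k + d - 1)%nat) in *. set (R0 := INR (Rc k d)).
  assert (HR0 : 0 <= R0) by apply pos_INR.
  set (g := R0 / 2 ^ (k + d - 1)).
  assert (Hp : 0 < 2 ^ (k + d - 1)) by (apply pow_lt; lra).
  assert (Hg : 0 <= g) by (unfold g, Rdiv; apply Rmult_le_pos; auto; left; apply Rinv_0_lt_compat; auto).
  assert (step : forall n, (T < n)%nat -> A n <= (2 - g) * A (n - 1)).
  { intros n Hn.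
    pose proof (a_rec k d hk hdk (n - 1) ltac:(unfold T in *; lia)) as R.
    pose proof (bad_ge k d hk hd hdk n ltac:(unfold T in *; lia)) as B.
    pose proof (A_S2 (n - (k + d)) (k + d - 1)) as C.
    replace (n - (k + d) + (k + d - 1))%nat with (n - 1)%nat in C by (unfold T in *; lia).
    replace (S (n - 1)) with n in R by (unfold T in *; lia).
    apply (f_equal INR) in R. rewrite mult_INR, plus_INR in R. apply le_INR in B. rewrite mult_INR in B.
    unfold A in *. fold R0 in B. simpl in R.
    assert (INR (a k d (n - 1)) / 2 ^ (k + d - 1) <= INR (a k d (n - (k + d)))).
    { apply (Rmult_le_reg_r (2 ^ (k + d - 1))); auto. field_simplify; lra. }
    unfold g. replace (R0 / 2 ^ (k + d - 1) * INR (a k d (n - 1))) with (R0 * (INR (a k d (n - 1)) / 2 ^ (k + d - 1))) by (field; lra).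
    assert (R0 * (INR (a k d (n - 1)) / 2 ^ (k + d - 1)) <= R0 * INR (a k d (n - (k + d)))) by (apply Rmult_le_compat_l; auto).
    pose proof (pos_INR (bad k d n)). lra. }
  destruct (Nat.eq_dec m T) as [E|E].
  { rewrite E, Nat.sub_diag. simpl. pose proof (log2_A_le T). 
    assert (0 < 2 ^ (k + d)) by (apply pow_lt; lra). unfold Rdiv. rewrite !Rmult_0_l. lra. }
  assert (Hg2 : 0 < 2 - g).
  { pose proof (step (S T) ltac:(lia)). simpl in H. rewrite Nat.sub_0_r in H.
    pose proof (A_pos (S T)). pose proof (A_pos T). nra. }
  assert (It : forall t, A (T + t) <= (2 - g) ^ t * A T).
  { induction t. simpl. rewrite Nat.add_0_r; lra.
    pose proof (step (T + S t)%nat ltac:(lia)). replace (T + S t - 1)%nat with (T + t)%nat in H by lia.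
    simpl. nra. }
  set (t := (m - T)%nat). replace m with (T + t)%nat by (unfold t; lia).
  assert (HAT : A T <= 2 ^ T).
  { pose proof (A_S2 0 T). simpl in H. unfold A in H. rewrite (a_short k d hk hdk 0%nat) in H by lia. simpl in H. unfold A. lra. }
  assert (Hq : (2 - g) ^ t <= 2 ^ t * exp (INR t * (- (g / 2)))).
  { rewrite <- exp_pow'. replace (2 - g) with (2 * (1 - g / 2)) by field.
    rewrite Rpow_mult_distr. apply Rmult_le_compat_l. apply pow_le; lra.
    apply pow_incr. split. lra. pose proof (exp_ineq1_le (- (g / 2))). lra. }
  assert (HA : A (T + t) <= 2 ^ (T + t) * exp (INR t * (- (g / 2)))).
  { rewrite pow_add. pose proof (It t). pose proof (A_pos T).
    assert (0 <= (2 - g) ^ t) by (apply pow_le; lra).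
    assert ((2 - g) ^ t * A T <= (2 ^ t * exp (INR t * - (g / 2))) * 2 ^ T) by (apply Rmult_le_compat; lra).
    lra. }
  apply log2_le in HA. 2: pose proof (A_pos (T + t)); lra.
  unfold log2R in HA |- *. rewrite ln_mult, ln_exp, ln_pow in HA; try lra. 2: apply pow_lt; lra. 2: apply exp_pos.
  assert (Eg : INR t * R0 / 2 ^ (k + d) = INR t * (g / 2)).
  { unfold g. assert (E2k : 2 ^ (k + d) = 2 * 2 ^ (k + d - 1)) by (replace (k + d)%nat with (S (k + d - 1)) at 1 by lia; reflexivity). rewrite E2k. field. lra. }
  rewrite Eg. pose proof ln2_lt. pose proof ln2_pos. pose proof (pos_INR t).
  assert (0 <= INR t * (g / 2)) by (apply Rmult_le_pos; lra).
  assert ((INR (T + t) * ln 2 + INR t * - (g / 2)) / ln 2 = INR (T + t) - INR t * (g / 2) / ln 2) by (field; lra).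
  assert (INR t * (g / 2) <= INR t * (g / 2) / ln 2).
  { apply (Rmult_le_reg_r (ln 2)); auto. field_simplify; nra. }
  lra.
Qed.

End Bounds.

Open Scope R_scope.

Lemma NoDup_all_vectors m : NoDup (all_vectors m).
Proof.
  induction m; simpl. constructor. auto. constructor.
  apply NoDup_app.
  - apply NoDup_map_NoDup_ForallPairs; auto. intros x y _ _ H; injection H; auto.
  - apply NoDup_map_NoDup_ForallPairs; auto. intros x y _ _ H; injection H; auto.
  - intros v H1 H2. apply in_map_iff in H1, H2. destruct H1 as [x [<- _]], H2 as [y [H _]]. discriminate.
Qed.

Lemma card_C2 n k d : card_set (C2 n k d) = a k d (n - k - ell d - 2 * d).
Proof.
  unfold card_set, C2, A2, a, cnt. rewrite nodup_fixed_point.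
  - apply length_map.
  - apply NoDup_map_NoDup_ForallPairs. 2: apply NoDup_filter, NoDup_all_vectors.
    intros x y _ _ H. rewrite !app_assoc in H. apply app_inv_tail in H.
    rewrite <- !app_assoc in H. do 3 apply app_inv_head in H. auto.
Qed.

Definition F k d m := INR m - log2R (A k d m).

Lemma redC_eq n k d : admissible n k d ->
  redC n k d = INR k + INR (ell d + 2 * d) + F k d (n - k - ell d - 2 * d).
Proof.
  intros [H1 H2]. unfold redC, F, A. rewrite card_C2.
  replace (INR n) with (INR (k + (ell d + 2 * d) + (n - k - ell d - 2 * d))) at 1 by (f_equal; lia).
  rewrite !plus_INR. ring.
Qed.

Lemma F_mono_m k d m m' : (1 <= k)%nat -> (d <= k)%nat -> (m <= m')%nat -> F k d m <= F k d m'.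
Proof.
  intros hk hdk Hm. induction Hm. lra. eapply Rle_trans; [apply IHHm|]. unfold F.
  pose proof (A_S2 k d hk hdk m0 1). rewrite Nat.add_1_r in H. simpl in H. rewrite Rmult_1_r in H.
  apply log2_le in H. 2: pose proof (A_pos k d hdk (S m0)); lra.
  unfold log2R at 2 in H. rewrite ln_mult in H by (try lra; pose proof (A_pos k d hdk m0); lra).
  fold (log2R (A k d m0)) in H. rewrite S_INR.
  assert (ln 2 / ln 2 = 1) by (field; pose proof ln2_pos; lra).
  unfold Rdiv in H, H0. rewrite Rmult_plus_distr_r in H.
  change (ln (A k d m0) * / ln 2) with (log2R (A k d m0)) in H. lra.
Qed.

Lemma F_mono_k k d m : (1 <= k)%nat -> (d <= k)%nat -> F (S k) d m <= F k d m.
Proof.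
  intros hk hdk. unfold F. apply Rplus_le_compat_l, Ropp_le_contravar. apply log2_le.
  pose proof (A_pos k d hdk m); lra. unfold A, a. apply le_INR, cnt_le.
  intros v _ H. apply wwlb_iff, Gp_S, wwlb_iff; auto.
Qed.

Lemma F_mono_k' k k' d m : (1 <= k)%nat -> (d <= k)%nat -> (k <= k')%nat -> F k' d m <= F k d m.
Proof.
  intros hk hdk H. induction H. lra. eapply Rle_trans; [apply F_mono_k; lia|auto].
Qed.

Lemma Rc_lower k d : (1 <= d)%nat -> (4 * d <= k)%nat ->
  (INR k / (2 * INR d)) ^ (d - 1) <= INR (Rc k d).
Proof.
  intros hd Hk. unfold Rc. rewrite cnt_Rpat by lia. rewrite pow_INR.
  destruct (Nat.eq_dec d 1) as [E|E]. { subst. simpl. lra. }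
  apply pow_incr. split.
  { apply Rmult_le_pos. apply pos_INR. left. apply Rinv_0_lt_compat. assert (1 <= INR d) by (apply (le_INR 1); lia). lra. }
  unfold q. set (qq := ((k - d + 1) / (d - 1))%nat).
  assert (Hq : ((d - 1) * (qq + 1) > k - d + 1)%nat).
  { unfold qq. pose proof (Nat.div_mod (k - d + 1) (d - 1) ltac:(lia)).
    pose proof (Nat.mod_upper_bound (k - d + 1) (d - 1) ltac:(lia)). lia. }
  assert (Hq2 : (k <= 2 * d * qq)%nat) by nia.
  apply le_INR in Hq2. rewrite !mult_INR in Hq2. assert (0 < INR d) by (apply (lt_INR 0); lia).
  apply (Rmult_le_reg_r (2 * INR d)). lra. field_simplify; try lra. simpl in Hq2. lra.
Qed.

Open Scope R_scope.

Definition P2 (x : R) := exp (x * ln 2).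

Lemma P2_add x y : P2 (x + y) = P2 x * P2 y.
Proof. unfold P2. rewrite <- exp_plus. f_equal; ring. Qed.

Lemma P2_pos x : 0 < P2 x.
Proof. apply exp_pos. Qed.

Lemma P2_nat k : P2 (INR k) = 2 ^ k.
Proof. unfold P2. rewrite <- exp_pow', exp_ln by lra. reflexivity. Qed.

Lemma P2_log x : 0 < x -> P2 (log2R x) = x.
Proof. intros H. unfold P2, log2R. replace (ln x / ln 2 * ln 2) with (ln x).
  apply exp_ln; auto. field. pose proof ln2_pos; lra. Qed.

Lemma log2_P2 x : log2R (P2 x) = x.
Proof. unfold P2, log2R. rewrite ln_exp. field. pose proof ln2_pos; lra. Qed.

Lemma P2_mulnat j y : P2 (INR j * y) = P2 y ^ j.
Proof. unfold P2. rewrite exp_pow'. f_equal; ring. Qed.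

Lemma P2_le x y : x <= y -> P2 x <= P2 y.
Proof. intros H. unfold P2. destruct (Rle_lt_or_eq_dec _ _ H).
  left. apply exp_increasing. pose proof ln2_pos. nra. subst; lra. Qed.

Lemma P2_sq y : 0 <= y -> y ^ 2 / 16 <= P2 y.
Proof.
  intros H. unfold P2. replace (y * ln 2) with (2 * (y * ln 2 / 2)) by field.
  replace (2 * (y * ln 2 / 2)) with (y * ln 2 / 2 + y * ln 2 / 2) by ring. rewrite exp_plus.
  pose proof (exp_ineq1_le (y * ln 2 / 2)). pose proof ln2_gt.
  assert (y / 4 <= 1 + y * ln 2 / 2) by nra.
  assert (0 <= y / 4) by lra. simpl. nra.
Qed.

Lemma growth c al be : 0 < c -> 0 <= al -> 0 <= be ->
  exists T0, 0 <= T0 /\ forall t, T0 <= t -> al * t + be <= c * P2 t.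
Proof.
  intros Hc Ha Hb. exists (1 + 16 * (al + be + 1) / c). split.
  { assert (0 <= 16 * (al + be + 1) / c) by (apply Rmult_le_pos; [lra|left; apply Rinv_0_lt_compat; auto]). lra. }
  intros t Ht. assert (0 <= 16 * (al + be + 1) / c) by (apply Rmult_le_pos; [lra|left; apply Rinv_0_lt_compat; auto]).
  pose proof (P2_sq t ltac:(lra)).
  assert (c * t >= 16 * (al + be + 1)).
  { assert (c * (16 * (al + be + 1) / c) = 16 * (al + be + 1)) by (field; lra). nra. }
  assert (c * (t ^ 2 / 16) <= c * P2 t) by (apply Rmult_le_compat_l; lra).
  simpl in *. nra.
Qed.

Lemma ceil_nat x : 0 <= x -> exists k : nat, x < INR k <= x + 1.
Proof.
  intros H. destruct (archimed x) as [H1 H2]. exists (Z.to_nat (up x)).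
  rewrite INR_IZR_INZ, Z2Nat.id. lra. apply le_IZR. lra.
Qed.

Lemma INR_le_nat a b : INR a <= INR b -> (a <= b)%nat.
Proof. apply INR_le. Qed.

Lemma argmin (f : nat -> R) (l : list nat) : l <> [] ->
  exists x, In x l /\ forall y, In y l -> f x <= f y.
Proof.
  induction l as [|h t IH]; intros H. congruence.
  destruct t as [|h2 t]. exists h. split. left; auto. intros y [<-|[]]; lra.
  destruct IH as [x [Hx Hm]]. discriminate.
  destruct (Rle_lt_dec (f h) (f x)).
  - exists h; split. left; auto. intros y [<-|Hy]. lra. specialize (Hm y Hy); lra.
  - exists x; split. right; auto. intros y [<-|Hy]. lra. auto.
Qed.

Lemma ell_ge d : (d <= ell d)%nat.
Proof. unfold ell. lia. Qed.

Open Scope R_scope.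

Definition Kc0 (d : nat) := / (2 * (4 * INR d) ^ (d - 1) * 2 ^ d).
Definition KC1 (d : nat) := 1 + INR (ell d + 2 * d) + 8 * 2 ^ (d - 1).
Definition Lam (d : nat) (T0 : R) := 64 * INR d ^ 2 + INR (ell d)
  + 16 * (12 + 2 * INR (ell d) + 6 * INR d) + 16 * 2 ^ (d + 2) + 2 * T0 + 8 * INR d + 4.

Lemma INR2 : INR 2 = 2. Proof. simpl; lra. Qed.
Lemma INR4 : INR 4 = 4. Proof. simpl; lra. Qed.

Section Final.
Variable d : nat.
Hypothesis hd : (1 <= d)%nat.
Variable T0 : R.
Hypothesis HT0p : 0 <= T0.
Hypothesis HT0 : forall t, T0 <= t -> 4 * t + (KC1 d + 5) <= Kc0 d * P2 t.
Variable n : nat.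
Hypothesis Hn : (1 <= n)%nat.
Hypothesis HL : Lam d T0 <= log2R (INR n).

Lemma Dge : 1 <= INR d.
Proof. apply (le_INR 1); auto. Qed.

Lemma Lbig : 64 * INR d ^ 2 + INR (ell d) + 16 * (12 + 2 * INR (ell d) + 6 * INR d)
  + 16 * 2 ^ (d + 2) + 2 * T0 + 8 * INR d + 4 <= log2R (INR n).
Proof. exact HL. Qed.

Lemma facts :
  let L := log2R (INR n) in
  let M := main_term n d in
  INR n = P2 L /\ 0 <= log2R L <= L / (2 * INR d) /\ L <= M <= 2 * L - 2 /\
  L * (12 + 2 * INR (ell d) + 6 * INR d) <= INR n /\ 2 ^ (d + 2) * L <= INR n /\
  P2 M = INR n * L ^ (d - 1) /\ 4 <= L.
Proof.
  intros L M. pose proof Dge. pose proof (pos_INR (ell d)).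
  assert (0 < 2 ^ (d + 2)) by (apply pow_lt; lra).
  pose proof Lbig as HL'. fold L in HL'.
  assert (Hn0 : 0 < INR n) by (apply (lt_INR 0); lia).
  assert (E0 : INR n = P2 L) by (unfold L; rewrite P2_log; auto).
  assert (HL4 : 4 <= L) by nra.
  assert (Hl0 : 0 <= log2R L).
  { unfold log2R. apply Rmult_le_pos. rewrite <- ln_1. apply ln_le'; lra.
    left; apply Rinv_0_lt_compat, ln2_pos. }
  set (l := log2R L) in *.
  assert (EL : L = P2 l) by (unfold l; rewrite P2_log; lra).
  pose proof (P2_sq l Hl0). rewrite <- EL in H2.
  assert (Hl1 : l <= L / (2 * INR d)).
  { apply (Rmult_le_reg_r (2 * INR d)). lra. field_simplify; try lra.
    destruct (Rle_lt_dec (l * 2 * INR d) L) as [C|C]. lra. exfalso.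
    assert (L * L < (l * 2 * INR d) * (l * 2 * INR d)) by (apply Rmult_le_0_lt_compat; lra).
    assert (64 * INR d ^ 2 * L <= L * L) by nra.
    simpl in *. nra. }
  pose proof (P2_sq L ltac:(lra)). rewrite <- E0 in H3.
  assert (EM : M = L + INR (d - 1) * l).
  { unfold M, main_term. rewrite minus_INR by auto. fold L. fold l. simpl. ring. }
  assert (Hd1 : 0 <= INR (d - 1)) by apply pos_INR.
  assert (Hd2 : INR (d - 1) = INR d - 1) by (rewrite minus_INR by auto; simpl; ring).
  split; auto. split; [split; auto|].
  split. { rewrite EM. split. nra. rewrite Hd2.
    assert ((INR d - 1) * l <= (INR d - 1) * (L / (2 * INR d))) by (apply Rmult_le_compat_l; lra).
    assert ((INR d - 1) * (L / (2 * INR d)) <= L / 2).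
    { apply (Rmult_le_reg_r (2 * INR d)). lra. field_simplify; nra. }
    lra. }
  split. { simpl in H3. nra. }
  split. { simpl in H3. nra. }
  split; auto. rewrite EM, P2_add, P2_mulnat, <- EL, E0. auto.
Qed.


Lemma upper : exists k0, admissible n k0 d /\ redC n k0 d <= main_term n d + KC1 d.
Proof.
  pose proof facts as Fa. simpl in Fa. set (L := log2R (INR n)) in *. set (M := main_term n d) in *.
  destruct Fa as [E0 [[Hl0 Hl1] [[HM1 HM2] [Hn1 [Hn2 [EM HL4]]]]]].
  pose proof Dge. pose proof (pos_INR (ell d)). pose proof Lbig as HL'. fold L in HL'.
  assert (0 < 2 ^ (d + 2)) by (apply pow_lt; lra). assert (0 <= INR d ^ 2) by (apply pow_le; lra).
  destruct (ceil_nat M ltac:(lra)) as [k0 [Hk1 Hk2]]. exists k0.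
  assert (Had : admissible n k0 d).
  { split.
    - apply INR_le_nat. lra.
    - apply INR_le_nat. rewrite !plus_INR, mult_INR, INR2. nra. }
  split; auto. rewrite redC_eq by auto.
  assert (hk : (1 <= k0)%nat) by (destruct Had; pose proof (ell_ge d); lia).
  assert (hdk : (d <= k0)%nat) by (destruct Had; pose proof (ell_ge d); lia).
  set (m := (n - k0 - ell d - 2 * d)%nat).
  assert (HSb : INR (Sb k0 d) <= (2 * L) ^ (d - 1)).
  { eapply Rle_trans. apply le_INR, Sb_bound; auto. rewrite pow_INR, plus_INR. simpl INR at 2.
    apply pow_incr. pose proof (pos_INR k0). lra. }
  assert (Hd1 : d = S (d - 1)) by lia.
  assert (H2k : INR n * L ^ (d - 1) <= 2 ^ k0).
  { rewrite <- EM, <- P2_nat. apply P2_le. lra. }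
  assert (HLp : 0 <= L ^ (d - 1)) by (apply pow_le; lra).
  assert (Hc : (4 * k0 * Sb k0 d <= 2 ^ k0)%nat).
  { apply INR_le_nat. rewrite !mult_INR, pow_INR, INR4, INR2.
    assert (4 * INR k0 * INR (Sb k0 d) <= 4 * (2 * L) * (2 * L) ^ (d - 1)).
    { pose proof (pos_INR (Sb k0 d)). pose proof (pos_INR k0). apply Rmult_le_compat; lra. }
    assert (4 * (2 * L) * (2 * L) ^ (d - 1) = 4 * 2 ^ d * (L * L ^ (d - 1))).
    { rewrite Hd1 at 2. simpl. rewrite Rpow_mult_distr. ring. }
    assert (2 ^ (d + 2) = 4 * 2 ^ d) by (rewrite pow_add; simpl; ring).
    assert (2 ^ (d + 2) * L * L ^ (d - 1) <= INR n * L ^ (d - 1)) by (apply Rmult_le_compat_r; lra).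
    nra. }
  pose proof (fupper k0 d hk hd hdk Hc m) as Hf. fold (F k0 d m) in Hf.
  assert (Hm : INR m <= INR n) by (apply le_INR; unfold m; lia).
  assert (8 * INR (Sb k0 d) / 2 ^ k0 * INR m <= 8 * 2 ^ (d - 1)).
  { assert (Hp : 0 < 2 ^ k0) by (apply pow_lt; lra).
    apply (Rmult_le_reg_r (2 ^ k0)); auto. field_simplify; try lra.
    assert (INR (Sb k0 d) * INR m <= (2 * L) ^ (d - 1) * INR n).
    { apply Rmult_le_compat; auto using pos_INR. }
    assert ((2 * L) ^ (d - 1) * INR n = 2 ^ (d - 1) * (INR n * L ^ (d - 1))) by (rewrite Rpow_mult_distr; ring).
    assert (0 <= 2 ^ (d - 1)) by (apply pow_le; lra).
    nra. }
  unfold KC1. lra.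
Qed.

Lemma lower k : admissible n k d -> INR k <= main_term n d - T0 -> main_term n d + KC1 d + 1 <= redC n k d.
Proof.
  intros Had Hk.
  pose proof facts as Fa. simpl in Fa. set (L := log2R (INR n)) in *. set (M := main_term n d) in *.
  destruct Fa as [E0 [[Hl0 Hl1] [[HM1 HM2] [Hn1 [Hn2 [EM HL4]]]]]].
  pose proof Dge. pose proof (pos_INR (ell d)). pose proof Lbig as HL'. fold L in HL'.
  assert (0 < 2 ^ (d + 2)) by (apply pow_lt; lra). assert (0 <= INR d ^ 2) by (apply pow_le; lra).
  destruct (ceil_nat (L / 2) ltac:(lra)) as [K1 [HK1 HK2]].
  assert (hk : (1 <= k)%nat) by (destruct Had; pose proof (ell_ge d); lia).
  assert (hdk : (d <= k)%nat) by (destruct Had; pose proof (ell_ge d); lia).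
  set (k' := Nat.max k K1).
  assert (Hkk : (k <= k')%nat) by lia.
  assert (Hk'M : INR k' <= M).
  { unfold k'. destruct (Nat.max_spec k K1) as [[_ ->]|[_ ->]]; lra. }
  assert (Hk'L : L / 2 <= INR k').
  { apply Rle_trans with (INR K1). lra. apply le_INR; lia. }
  assert (Hk'd : (4 * d <= k')%nat).
  { apply INR_le_nat. rewrite mult_INR, INR4. lra. }
  assert (hk' : (1 <= k')%nat) by lia. assert (hdk' : (d <= k')%nat) by lia.
  set (m := (n - k - ell d - 2 * d)%nat). set (m' := (n - k' - ell d - 2 * d)%nat).
  assert (Hsz : (2 * (3 * k' + ell d + 3 * d) <= n)%nat).
  { apply INR_le_nat. rewrite !mult_INR, !plus_INR, !mult_INR. simpl (INR 2). simpl (INR 3). nra. }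
  assert (HF1 : F k' d m' <= F k d m).
  { eapply Rle_trans; [apply (F_mono_m k' d m' m); auto; unfold m, m'; lia|apply F_mono_k'; auto]. }
  pose proof (flower k' d hk' hd hdk' m' ltac:(unfold m'; lia)) as Hfl. fold (F k' d m') in Hfl.
  assert (Hm2 : INR n / 2 <= INR (m' - (2 * k' + d - 1))).
  { assert (INR n <= 2 * INR (m' - (2 * k' + d - 1))).
    { rewrite <- INR2, <- mult_INR. apply le_INR. unfold m'. lia. } lra. }
  assert (HRc : (L / (4 * INR d)) ^ (d - 1) <= INR (Rc k' d)).
  { eapply Rle_trans; [|apply Rc_lower; auto]. apply pow_incr. split.
    apply Rmult_le_pos. lra. left; apply Rinv_0_lt_compat; lra.
    apply (Rmult_le_reg_r (4 * INR d)). lra. field_simplify; lra. }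
  assert (Ek : 2 ^ (k' + d) * P2 (M - INR k') = 2 ^ d * (INR n * L ^ (d - 1))).
  { rewrite pow_add, <- P2_nat, <- EM. replace M with (INR k' + (M - INR k')) at 2 by ring.
    rewrite P2_add. ring. }
  assert (HFc : Kc0 d * P2 (M - INR k') <= F k' d m').
  { eapply Rle_trans; [|apply Hfl].
    assert (Hp : 0 < 2 ^ (k' + d)) by (apply pow_lt; lra).
    pose proof (P2_pos (M - INR k')).
    assert (Hx : 0 < (4 * INR d) ^ (d - 1)) by (apply pow_lt; lra).
    assert (HLp : 0 < L ^ (d - 1)) by (apply pow_lt; lra).
    assert (E1 : (L / (4 * INR d)) ^ (d - 1) = L ^ (d - 1) / (4 * INR d) ^ (d - 1)).
    { unfold Rdiv. rewrite Rpow_mult_distr, pow_inv. reflexivity. }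
    rewrite E1 in HRc.
    assert (INR n / 2 * (L ^ (d - 1) / (4 * INR d) ^ (d - 1)) <= INR (m' - (2 * k' + d - 1)) * INR (Rc k' d)).
    { assert (0 <= L ^ (d - 1) / (4 * INR d) ^ (d - 1)).
      { apply Rmult_le_pos. lra. left; apply Rinv_0_lt_compat; lra. }
      assert (0 <= INR n / 2) by (pose proof (pos_INR n); lra).
      apply Rmult_le_compat; lra. }
    apply Rle_trans with (INR n / 2 * (L ^ (d - 1) / (4 * INR d) ^ (d - 1)) / 2 ^ (k' + d)).
    2:{ unfold Rdiv at 3 4. apply Rmult_le_compat_r. left; apply Rinv_0_lt_compat; lra. lra. }
    unfold Kc0. apply (Rmult_le_reg_r (2 ^ (k' + d))); auto.
    replace (INR n / 2 * (L ^ (d - 1) / (4 * INR d) ^ (d - 1)) / 2 ^ (k' + d) * 2 ^ (k' + d))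
      with (INR n / 2 * (L ^ (d - 1) / (4 * INR d) ^ (d - 1))) by (field; lra).
    replace (/ (2 * (4 * INR d) ^ (d - 1) * 2 ^ d) * P2 (M - INR k') * 2 ^ (k' + d))
      with ((2 ^ (k' + d) * P2 (M - INR k')) / (2 * (4 * INR d) ^ (d - 1) * 2 ^ d)) by (field; split; try lra; apply pow_nonzero; lra).
    rewrite Ek. assert (0 < 2 ^ d) by (apply pow_lt; lra). right. field. lra. }
  rewrite redC_eq by auto. fold m.
  pose proof (pos_INR (ell d + 2 * d)). pose proof (pos_INR k).
  unfold k' in *. destruct (Nat.max_spec k K1) as [[C Ck]|[C Ck]]; rewrite Ck in *.
  -
    pose proof (HT0 (M - INR K1) ltac:(lra)). lra.
  - pose proof (HT0 (M - INR k) ltac:(lra)). lra.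
Qed.

End Final.

Open Scope R_scope.

Theorem lemma8 (d : nat) (hd : (1 <= d)%nat) :
  exists (c : R) (N : nat),
    forall n : nat, (N <= n)%nat ->
      (exists k, is_minimizer n k d) /\
      (forall k, is_minimizer n k d ->
         Rabs (redC n k d - main_term n d) <= c /\
         Rabs (INR k - main_term n d) <= c).
Proof.
  pose proof (Dge d hd) as HD.
  assert (HC1 : 0 <= KC1 d).
  { unfold KC1. pose proof (pos_INR (ell d + 2 * d)%nat). assert (0 <= 2 ^ (d - 1)) by (apply pow_le; lra). lra. }
  assert (Hc0 : 0 < Kc0 d).
  { unfold Kc0. apply Rinv_0_lt_compat. assert (0 < (4 * INR d) ^ (d - 1)) by (apply pow_lt; lra).
    assert (0 < 2 ^ d) by (apply pow_lt; lra). nra. }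
  destruct (growth (Kc0 d) 4 (KC1 d + 5) Hc0 ltac:(lra) ltac:(lra)) as [T0 [HT0p HT0]].
  assert (HLam : 0 <= Lam d T0).
  { unfold Lam. pose proof (pos_INR (ell d)). assert (0 < 2 ^ (d + 2)) by (apply pow_lt; lra).
    assert (0 <= INR d ^ 2) by (apply pow_le; lra). lra. }
  destruct (ceil_nat (Lam d T0) HLam) as [p [Hp1 Hp2]].
  exists (KC1 d + T0), (2 ^ p)%nat. intros n Hn.
  assert (Hn1 : (1 <= n)%nat). { pose proof (Nat.pow_le_mono_r 2 0 p ltac:(lia) ltac:(lia)). simpl in H. lia. }
  assert (HL : Lam d T0 <= log2R (INR n)).
  { apply le_INR in Hn. rewrite pow_INR, INR2 in Hn. apply log2_le in Hn. 2: apply pow_lt; lra.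
    rewrite log2R_pow2 in Hn. lra. }
  destruct (upper d hd T0 HT0p n Hn1 HL) as [k0 [Hk0 Hr0]].
  split.
  - set (l := filter (fun k => (ell d <=? k)%nat && (k + ell d + 2 * d <=? n)%nat) (seq 0 (S n))).
    assert (Hin : forall k, In k l <-> admissible n k d).
    { intros k. unfold l, admissible. rewrite filter_In, in_seq, andb_true_iff, !Nat.leb_le. lia. }
    destruct (argmin (fun k => redC n k d) l) as [x [Hx Hm]].
    { intros E. apply Hin in Hk0. rewrite E in Hk0. destruct Hk0. }
    exists x. split. apply Hin; auto. intros k' Hk'. apply Hm, Hin; auto.
  - intros k [Hadk Hmin]. specialize (Hmin k0 Hk0).
    assert (Hlow : main_term n d - T0 < INR k).
    { destruct (Rle_lt_dec (INR k) (main_term n d - T0)) as [C|C]; auto.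
      pose proof (lower d hd T0 HT0p HT0 n Hn1 HL k Hadk C). lra. }
    assert (hk : (1 <= k)%nat) by (destruct Hadk; pose proof (ell_ge d); lia).
    assert (hdk : (d <= k)%nat) by (destruct Hadk; pose proof (ell_ge d); lia).
    assert (Hge : INR k <= redC n k d).
    { rewrite redC_eq by auto. pose proof (pos_INR (ell d + 2 * d)%nat).
      pose proof (log2_A_le k d hk hd hdk (n - k - ell d - 2 * d)%nat). unfold F. lra. }
    split; apply Rabs_le; split; lra.
Qed.
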